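(* Let $\sigma=(1\,2\,\cdots\,n)\in S_n$. Let $\mathcal{C}$ be a chain of the Greene–Kleitman symmetric chain decomposition of $B_n$ and let $X\in\mathcal{C}$ with $|X|\le\lfloor n/2\rfloor$. Then $(\sigma(X))^*=\sigma(X^* )$. Consequently $(\sigma^j(X))^*=\sigma^j(X^* )$ for all integers $j$, and hence $(\rho(X))^*=\rho(X^* )$ for all $\rho\in\langle\sigma\rangle$.
   Context: Greene–Kleitman SCD of $B_n$: for $A\subseteq[n]$, process $k=1,2,\dots,n$ in order; if $k\in A$ and there is some $j<k$ with $j\notin A$ and $j$ not yet paired, let $p_A(k)$ be the largest such $j$, and say $p_A(k)$ and $k$ are paired. Let $R(A)$ be the set of $k$ for which $p_A(k)$ is defined, $L(A)=\{p_A(k):k\in R(A)\}$, and write $[n]\setminus(R(A)\cup L(A))=\{a_1<a_2<\dots<a_s\}$. The chain of $A$ is $\mathcal{C}(A)=\{X\subseteq[n]: R(X)=R(A)\}$, which equals $R(A)\subset R(A)\cup\{a_1\}\subset R(A)\cup\{a_1,a_2\}\subset\dots\subset R(A)\cup\{a_1,\dots,a_s\}=[n]\setminus L(A)$. The distinct sets $\mathcal{C}(A)$, $A\in B_n$, form a partition of $B_n$ into symmetric chains (the Greene–Kleitman SCD). For a chain $\mathcal{C}$ of this decomposition and $X\in\mathcal{C}$ with $|X|\le\lfloor n/2\rfloor$, $X^*$ denotes the unique member of $\mathcal{C}$ with $|X^*|=n-|X|$. In $(\sigma(X))^*$, the star is taken in the chain containing $\sigma(X)$. *)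

(* Defs.v *)
(* Elements of [n] = {1,...,n} are represented by 'I_n,
   with k : 'I_n standing for k+1. *)
From mathcomp Require Import all_boot all_order all_fingroup.
Set Implicit Arguments. Unset Strict Implicit. Unset Printing Implicit Defensive.

Section GK.
Variable n : nat.

(* One step of the Greene–Kleitman scan: state = (stack of unpaired
   non-members, in decreasing order on top; list of pairs (p_A(k), k)). *)
Definition gk_step (A : {set 'I_n}) (st : seq 'I_n * seq ('I_n * 'I_n)) (k : 'I_n) :=
  let: (stk, prs) := st in
  if k \in A then
    match stk with
    | j :: stk' => (stk', (j, k) :: prs)   (* j = largest unpaired j<k, j \notin A *)
    | [::] => (stk, prs)
    end
  else (k :: stk, prs).

Definition gk_pairs (A : {set 'I_n}) : seq ('I_n * 'I_n) :=
  (foldl (gk_step A) ([::], [::]) (enum 'I_n)).2.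

Definition gkR (A : {set 'I_n}) : {set 'I_n} := [set x | x \in map snd (gk_pairs A)].
Definition gkL (A : {set 'I_n}) : {set 'I_n} := [set x | x \in map fst (gk_pairs A)].

Definition gk_chain (A : {set 'I_n}) : {set {set 'I_n}} := [set X | gkR X == gkR A].

(* X^* : the member of the chain of X of size n - |X|
   (it exists and is unique when |X| <= n/2, the default is never used then) *)
Definition gk_star (X : {set 'I_n}) : {set 'I_n} :=
  odflt X [pick Y in gk_chain X | #|Y| == n - #|X|].

Definition sigma : {perm 'I_n} := perm (@ordS_inj n).

End GK.

(* Main.v *)
From Stdlib Require Import ZArith Lia Classical.
From mathcomp Require Import all_boot all_order all_fingroup.
From mathcomp Require Import zify.
Require Import Defs.
Set Implicit Arguments. Unset Strict Implicit. Unset Printing Implicit Defensive.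

Fixpoint hZ (f : nat -> bool) (b : nat) : Z :=
  match b with 0 => 0%Z | b'.+1 => (hZ f b' + (if f b' then (-1) else 1))%Z end.
Fixpoint Sr (f : nat -> bool) (i p : nat) : bool :=
  match i with 0 => false
  | i'.+1 => if p == i' then (hZ f p <? hZ f i'.+1)%Z
             else Sr f i' p && (hZ f p <? hZ f i'.+1)%Z end.
Fixpoint mu (f : nat -> bool) (b : nat) : Z :=
  match b with 0 => 0%Z | b'.+1 => Z.min (mu f b') (hZ f b'.+1) end.

Section Path.
Variable f : nat -> bool.
Local Notation h := (hZ f).

Lemma hS i : h i.+1 = (h i + (if f i then (-1) else 1))%Z.
Proof. by []. Qed.

Lemma SrP i p : Sr f i p <-> (p < i)%N /\ (forall m, (p < m <= i)%N -> (h p < h m)%Z).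
Proof.
elim: i => [|i IH] /=; first by split=> // -[].
case: eqP => [->|/eqP ne].
  split.
    move/Z.ltb_spec0 => H; split => // m /andP [a b].
    by have -> : m = i.+1 by lia.
  by move=> [_ H]; apply/Z.ltb_spec0; apply: (H i.+1); lia.
split.
  move/andP => [/IH [lt H] /Z.ltb_spec0 H2]; split; first lia.
  move=> m /andP [a b]; have [c|c] := leqP m i.
    by apply: H; lia.
  by have -> : m = i.+1 by lia.
move=> [lt H]; apply/andP; split; last by apply/Z.ltb_spec0; apply: (H i.+1); lia.
apply/IH; split; first lia.
by move=> m /andP [a b]; apply: H; lia.
Qed.

Lemma Sr_lt i p : Sr f i p -> (p < i)%N.
Proof. by move/SrP => []. Qed.

Lemma Sr_h i p : Sr f i p -> (h p < h i)%Z.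
Proof. move/SrP => [a H]; apply: H; lia. Qed.

Lemma muS b : mu f b.+1 = Z.min (mu f b) (h b.+1).
Proof. by []. Qed.

Lemma mu_le b m : (m <= b)%N -> (mu f b <= h m)%Z.
Proof.
elim: b => [|b IH]; first by rewrite leqn0 => /eqP ->; simpl; lia.
rewrite muS leq_eqVlt => /orP [/eqP ->|H]; first lia.
have := IH H; lia.
Qed.

Lemma mu_ex b : exists m, (m <= b)%N /\ mu f b = h m.
Proof.
elim: b => [|b [m [Hm E]]]; first by exists 0%N.
rewrite muS; case: (Z.min_spec (mu f b) (h b.+1)) => [[_ ->]|[_ ->]].
  by exists m; split => //; lia.
by exists b.+1.
Qed.

Lemma mu_le0 b : (mu f b <= 0)%Z.
Proof. by have := mu_le (leq0n b). Qed.

Definition T i c := count (fun p => Sr f i p && (h p <? c)%Z) (iota 0 i).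

Lemma T_formula i c : Z.of_nat (T i c) = Z.max 0 (Z.min c (h i) - mu f i).
Proof.
elim: i c => [|i IH] c; first by rewrite /T /=; lia.
have mle : (mu f i <= h i)%Z by apply: mu_le.
rewrite /T -addn1 iotaD count_cat /= add0n addn0 !addn1.
rewrite [Sr f i.+1 i]/= eqxx muS hS.
case fi: (f i).
- have -> : count (fun p => Sr f i.+1 p && (h p <? c)%Z) (iota 0 i)
           = T i (Z.min c (h i - 1)).
    apply: eq_in_count => p; rewrite mem_iota add0n => /andP [_ pl].
    have ne : (p == i) = false by rewrite (ltn_eqF pl).
    rewrite [Sr f i.+1 p]/= ne fi.
    case: (Sr f i p) => //=.
    case: (Z.ltb_spec (h p) (h i + -1)); case: (Z.ltb_spec (h p) c);
      case: (Z.ltb_spec (h p) (Z.min c (h i - 1))) => //; lia.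
  case: (Z.ltb_spec (h i) (h i + -1)%Z) => /= H; first lia.
  rewrite addn0 IH; lia.
- have -> : count (fun p => Sr f i.+1 p && (h p <? c)%Z) (iota 0 i) = T i c.
    apply: eq_in_count => p; rewrite mem_iota add0n => /andP [_ pl].
    have ne : (p == i) = false by rewrite (ltn_eqF pl).
    rewrite [Sr f i.+1 p]/= ne fi.
    case E: (Sr f i p) => //=.
    have := Sr_h E.
    by case: (Z.ltb_spec (h p) (h i + 1)) => //; lia.
  case: (Z.ltb_spec (h i) (h i + 1)%Z) => /= H; last lia.
  rewrite Nat2Z.inj_add IH.
  case: (Z.ltb_spec (h i) c) => /= H2; lia.
Qed.


Lemma h_step i : h i.+1 = (h i + 1)%Z \/ h i.+1 = (h i - 1)%Z.
Proof. rewrite hS; case: (f i); lia. Qed.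

Lemma Sr_exists i j : (j <= i)%N -> (h j < h i)%Z ->
  exists p, [/\ Sr f i p, h p = (h i - 1)%Z & forall q, Sr f i q -> (q <= p)%N].
Proof.
move=> ji hji.
pose P q := (q < i)%N && (h q <=? h i - 1)%Z.
have exP : exists q, P q.
  exists j; rewrite /P; apply/andP; split.
    by case: (ltngtP j i) ji => // E _; move: hji; rewrite E; lia.
  by apply/Z.leb_spec0; lia.
have ubP : forall q, P q -> (q <= i)%N by move=> q /andP [a _]; lia.
case: (ex_maxnP exP ubP) => p /andP [pi /Z.leb_spec0 hp] maxp.
have Srp : Sr f i p.
  apply/SrP; split => // m /andP [a b].
  case: (ltngtP m i) b => // [mi _|-> _]; last lia.
  have : ~~ P m by apply/negP => /maxp; lia.
  rewrite /P mi /= => /negP H.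
  case: (Z.leb_spec (h m) (h i - 1)) H => //; lia.
exists p; split => //.
  case: (ltngtP p.+1 i) pi => // [pi' _|E _].
    have : ~~ P p.+1 by apply/negP => /maxp; lia.
    rewrite /P pi' /= => /negP H.
    case: (Z.leb_spec (h p.+1) (h i - 1)) H => // H1 _.
    have := h_step p; lia.
  have := h_step p; rewrite E; lia.
move=> q Sq; apply: maxp; rewrite /P (Sr_lt Sq) /=.
by apply/Z.leb_spec0; have := Sr_h Sq; lia.
Qed.

Definition Lf i := filter (Sr f i) (iota 0 i).

Lemma Lf_split i : Lf i.+1 =
  filter (fun p => Sr f i p && (h p <? h i.+1)%Z) (iota 0 i) ++
  (if (h i <? h i.+1)%Z then [:: i] else [::]).
Proof.
rewrite /Lf -addn1 iotaD filter_cat add0n /= addn1 [Sr f i.+1 i]/= eqxx.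
congr (_ ++ _).
apply: eq_in_filter => p; rewrite mem_iota add0n => /andP [_ pl].
by rewrite [Sr f i.+1 p]/= (ltn_eqF pl).
Qed.

Lemma Lf_up i : f i = false -> Lf i.+1 = rcons (Lf i) i.
Proof.
move=> fi; rewrite Lf_split hS fi.
case: (Z.ltb_spec (h i) (h i + 1)) => [_|]; last lia.
rewrite -cats1; congr (_ ++ _).
apply: eq_in_filter => p _; case E: (Sr f i p) => //=.
have := Sr_h E.
by case: (Z.ltb_spec (h p) (h i + 1)) => //; lia.
Qed.

Lemma Lf_down_filter i : f i = true ->
  Lf i.+1 = filter (fun p => (h p <? h i - 1)%Z) (Lf i).
Proof.
move=> fi; rewrite Lf_split hS fi.
case: (Z.ltb_spec (h i) (h i + -1)) => [|_]; first lia.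
rewrite cats0 /Lf -filter_predI; apply: eq_filter => p /=.
by rewrite andbC.
Qed.

Lemma mem_Lf i p : (p \in Lf i) = Sr f i p.
Proof.
rewrite /Lf mem_filter mem_iota add0n /=.
by case E: (Sr f i p) => //=; rewrite (Sr_lt E).
Qed.

Lemma Lf_down_nil i : f i = true -> Lf i = [::] ->
  Lf i.+1 = [::] /\ forall j, (j <= i)%N -> (h i.+1 < h j)%Z.
Proof.
move=> fi L0; rewrite Lf_down_filter // L0; split => // j ji.
rewrite hS fi.
case: (Z.ltb_spec (h j) (h i)) => H; last lia.
have [p [Sp _ _]] := Sr_exists ji H.
by have := mem_Lf i p; rewrite L0 Sp in_nil.
Qed.

Lemma sorted_rcons_lt (l : seq nat) t q : sorted ltn (rcons l t) -> q \in l -> (q < t)%N.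
Proof.
elim: l => [|x l IH] //= Hs; rewrite in_cons => /orP [/eqP ->|ql].
  have := order_path_min ltn_trans Hs => /allP; apply.
  by rewrite mem_rcons mem_head.
by apply: IH => //; apply: path_sorted Hs.
Qed.

Lemma Lf_down_cons i l t : f i = true -> Lf i = rcons l t ->
  [/\ Lf i.+1 = l, h t = h i.+1 & (t < i)%N].
Proof.
move=> fi Le.
have St : Sr f i t by rewrite -mem_Lf Le mem_rcons mem_head.
have [p [Sp hp maxp]] := Sr_exists (ltnW (Sr_lt St)) (Sr_h St).
have srt : sorted ltn (rcons l t).
  by rewrite -Le; apply: sorted_filter; [exact: ltn_trans|exact: iota_ltn_sorted].
have tp : t = p.
  have : p \in rcons l t by rewrite -Le mem_Lf.
  rewrite mem_rcons in_cons => /orP [/eqP -> //|pl].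
  have := sorted_rcons_lt srt pl; have := maxp _ St; lia.
have hti : h t = h i.+1 by rewrite hS fi tp hp; lia.
split => //; last exact: Sr_lt.
rewrite Lf_down_filter // Le filter_rcons.
rewrite tp hp; case: (Z.ltb_spec (h i - 1) (h i - 1)) => [|_]; first lia.
apply/all_filterP/allP => q ql.
have Sq : Sr f i q by rewrite -mem_Lf Le mem_rcons in_cons ql orbT.
have qt := sorted_rcons_lt srt ql.
have := (proj2 (proj1 (SrP _ _) Sq)) t; rewrite qt (ltnW (Sr_lt St)) => /(_ erefl).
rewrite tp hp /=; by case: (Z.ltb_spec (h q) (h i - 1)) => //; lia.
Qed.

End Path.

Arguments hZ f b : simpl never.

Definition inX n (A : {set 'I_n}) (i : nat) : bool := [exists x in A, val x == i].

Lemma inXE n (A : {set 'I_n}) (x : 'I_n) : inX A x = (x \in A).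
Proof.
apply/existsP/idP => [[y /andP [yA /eqP/val_inj <-]] //| xA].
by exists x; rewrite xA eqxx.
Qed.

Lemma inX_lt n (A : {set 'I_n}) i : inX A i -> (i < n)%N.
Proof. rewrite /inX => /existsP [y /andP [_ /eqP <-]]; exact: ltn_ord. Qed.

Lemma gk_inv n (A : {set 'I_n}) i : (i <= n)%N ->
  map val (foldl (gk_step A) ([::],[::]) (take i (enum 'I_n))).1 = rev (Lf (inX A) i) /\
  forall k : 'I_n, (k \in map snd (foldl (gk_step A) ([::],[::]) (take i (enum 'I_n))).2) <->
     [/\ (k < i)%N, k \in A & exists j, (j <= k)%N /\ (hZ (inX A) j <= hZ (inX A) k.+1)%Z].
Proof.
elim: i => [|i IH] lein.
  by rewrite take0 /=; split => // k; split => //; case.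
have ilt : (i < n)%N by lia.
have [IH1 IH2] := IH (ltnW lein).
rewrite (take_nth (Ordinal ilt)) ?size_enum_ord // foldl_rcons.
set x := nth _ _ i.
have vx : nat_of_ord x = i by apply: nth_enum_ord.
move: IH1 IH2.
case: (foldl _ _ _) => stk prs /= IH1 IH2.
have fx : inX A i = (x \in A) by rewrite -vx inXE.
rewrite /gk_step; case xA: (x \in A).
- case: stk IH1 => [|t stk'] IH1 /=.
  + have L0 : Lf (inX A) i = [::].
      by apply/size0nil; rewrite -size_rev -IH1.
    have [L1 hmin] := Lf_down_nil (etrans fx xA) L0.
    rewrite L1; split => // k; split.
      by move/IH2 => [a b c]; split; [lia | exact b | exact c].
    move=> [a b [j [c d]]]; apply/IH2; split => //; last by exists j.
    have [//|ge] := ltnP k i.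
    have E : nat_of_ord k = i by lia.
    have := hmin j; rewrite -E => /(_ c); lia.
  + have Le : Lf (inX A) i = rcons (rev (map val stk')) (val t).
      by rewrite -rev_cons -[_ :: map _ _]/(map val (t :: stk')) IH1 revK.
    have [L1 ht tlt] := Lf_down_cons (etrans fx xA) Le.
    rewrite L1 revK; split => // k; rewrite /= in_cons; split.
      case/orP => [/eqP E|H]; last by move: H => /IH2 [a b c]; split; [lia | exact b | exact c].
      rewrite E xA; split => //; first lia.
      have tlt2 : (nat_of_ord t < i)%N by exact: tlt.
      have ht2 : hZ (inX A) (nat_of_ord t) = hZ (inX A) i.+1 by exact: ht.
      by exists t; split; [lia | rewrite vx ht2; lia].
    move=> [a b [j [c d]]]; apply/orP.
    have [lt|ge] := ltnP k i.
      by right; apply/IH2; split => //; exists j.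
    by left; apply/eqP/val_inj; rewrite /= vx; lia.
- have fi : inX A i = false by rewrite fx xA.
  rewrite (Lf_up fi) rev_rcons /= vx IH1; split => // k; split.
    by move/IH2 => [a b c]; split; [lia | exact b | exact c].
  move=> [a b c]; apply/IH2; split => //.
  have [//|ge] := ltnP k i.
  have : k = x by apply/val_inj; rewrite /= vx; lia.
  by move=> Ek; move: b; rewrite Ek xA.
Qed.

Lemma gkR_char n (A : {set 'I_n}) (k : 'I_n) : k \in gkR A <->
  (k \in A /\ exists j, (j <= k)%N /\ (hZ (inX A) j <= hZ (inX A) k.+1)%Z).
Proof.
have [_ H] := gk_inv A (leqnn n).
rewrite take_oversize ?size_enum_ord // in H.
rewrite /gkR inE /gk_pairs H; split => [[]|[]] //.
Qed.

Lemma card_count n (A : {set 'I_n}) : #|A| = count (mem A) (enum 'I_n).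
Proof.
rewrite cardE /enum_mem size_filter; congr count; symmetry.
by apply/all_filterP/allP => x.
Qed.

Lemma hZ_count (f : nat -> bool) b : hZ f b = (Z.of_nat b - 2 * Z.of_nat (count f (iota 0 b)))%Z.
Proof.
elim: b => [|b IH]; first by [].
rewrite hS IH -addn1 iotaD count_cat add0n [count _ [:: b]]/= addn0.
case: (f b); rewrite /nat_of_bool; lia.
Qed.

Lemma hZ_card n (A : {set 'I_n}) : hZ (inX A) n = (Z.of_nat n - 2 * Z.of_nat #|A|)%Z.
Proof.
rewrite hZ_count card_count -val_enum_ord count_map.
by congr (_ - 2 * Z.of_nat _)%Z; apply: eq_count => x /=; rewrite inXE.
Qed.

Lemma hZ_prefix (f g : nat -> bool) i : (forall m, (m < i)%N -> f m = g m) ->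
  forall m, (m <= i)%N -> hZ f m = hZ g m.
Proof.
move=> H; elim => [|m IH] mi //.
rewrite !hS IH ?H //; lia.
Qed.

Lemma hZ_incl (f g : nat -> bool) a b : (a <= b)%N -> (forall m, (a <= m < b)%N -> g m -> f m) ->
  (hZ f b - hZ f a <= hZ g b - hZ g a)%Z.
Proof.
move=> ab H; elim: b ab H => [|b IH] ab H.
  by rewrite leqn0 in ab; rewrite (eqP ab); lia.
case: (ltngtP a b.+1) ab => // [lt|->] _; last lia.
have := IH lt (fun m hm => H m ltac:(lia)).
rewrite !hS; have := H b ltac:(lia).
case: (f b); case: (g b) => //= K; try lia.
Qed.

Lemma hZ_range (f g : nat -> bool) a b : (a <= b)%N -> (forall m, (a <= m < b)%N -> f m = g m) ->
  (hZ f b - hZ f a = hZ g b - hZ g a)%Z.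
Proof.
move=> ab H.
have H1 : forall m, (a <= m < b)%N -> g m -> f m by move=> m hm; rewrite H.
have H2 : forall m, (a <= m < b)%N -> f m -> g m by move=> m hm; rewrite H.
have := hZ_incl ab H1; have := hZ_incl ab H2; lia.
Qed.

Definition RN (f : nat -> bool) m := f m /\ exists j, (j <= m)%N /\ (hZ f j <= hZ f m.+1)%Z.

Lemma gkR_nat n (A B : {set 'I_n}) : gkR A = gkR B ->
  forall m, (m < n)%N -> RN (inX A) m <-> RN (inX B) m.
Proof.
move=> E m mn; pose k := Ordinal mn.
have fA : inX A m = (k \in A) := inXE A k.
have fB : inX B m = (k \in B) := inXE B k.
have cA := gkR_char A k; have cB := gkR_char B k; rewrite E in cA.
rewrite /RN fA fB; split => H.
  by apply/cB/cA.
by apply/cA/cB.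
Qed.

Lemma uniq_core n (Y Y' : {set 'I_n}) i : gkR Y = gkR Y' -> (i < n)%N ->
  (forall m, (m < i)%N -> inX Y m = inX Y' m) -> inX Y i -> ~~ inX Y' i ->
  (hZ (inX Y) n < hZ (inX Y') n)%Z.
Proof.
move=> ER lin pre fi gi.
set f := inX Y in pre fi *; set g := inX Y' in pre gi *.
have RR := gkR_nat ER.
have hpre := hZ_prefix pre.
have hfi : hZ f i.+1 = (hZ f i - 1)%Z by rewrite hS fi; lia.
have hgi : hZ g i.+1 = (hZ g i + 1)%Z by rewrite hS (negbTE gi); lia.
have hii := hpre i (leqnn i).
case: (classic (exists k, (i <= k < n)%N /\ (hZ g k.+1 <= hZ g i)%Z)) => [exk|nok].
- pose P k := (i <= k < n)%N && (hZ g k.+1 <=? hZ g i)%Z.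
  have exP : exists k, P k.
    by case: exk => k [a b]; exists k; rewrite /P a; apply/Z.leb_spec0.
  case: (ex_minnP exP) => k /andP [kr /Z.leb_spec0 hk] mink.
  have mink' : forall k', (i <= k' < k)%N -> (hZ g i < hZ g k'.+1)%Z.
    move=> k' hk'; case: (Z.ltb_spec (hZ g i) (hZ g k'.+1)) => // H.
    have : P k' by rewrite /P; apply/andP; split; [lia|apply/Z.leb_spec0].
    move/mink; lia.
  have ki : (i < k)%N.
    case: (ltngtP i k) kr => // E _; move: hk; rewrite -E hgi; lia.
  have hk1 : (hZ g i < hZ g k)%Z.
    have := mink' k.-1 ltac:(lia); by rewrite prednK //; lia.
  have gk : g k.
    move: hk; rewrite hS; case: (g k) => //; lia.
  have hkk : hZ g k.+1 = hZ g i by move: hk; rewrite hS gk; lia.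
  have [_ [j0 [j0k hj0]]] : RN f k.
    apply/RR; first lia.
    by rewrite -/g; split => //; exists i; split; [lia|lia].
  pose U u := [&& (i <= u <= k)%N, f u & ~~ g u].
  have exU : exists u, U u by exists i; rewrite /U fi gi leqnn /= andbT; lia.
  have ubU : forall u, U u -> (u <= k)%N by move=> u /and3P [/andP [_ ?] _ _].
  case: (ex_maxnP exU ubU) => u /and3P [/andP [iu uk] fu gu] maxu.
  have ulk : (u < k)%N by case: (ltngtP u k) uk => // E _; move: gu; rewrite E gk.
  have notRu : ~ RN f u.
    move/RR => /(_ ltac:(lia)) [gu' _]; by move: gu; rewrite /g gu'.
  have lowu : forall j, (j <= u)%N -> (hZ f u.+1 < hZ f j)%Z.
    move=> j ju; case: (Z.ltb_spec (hZ f u.+1) (hZ f j)) => // H; exfalso.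
    by apply: notRu; split => //; exists j; split => //.
  have agree : forall m, (u < m <= k)%N -> f m = g m.
    move=> m hm; case gm: (g m).
      have : RN g m.
        split => //; exists i; split; first lia.
        case: (ltngtP m k) => [mk|mk|->]; last lia.
          by have := mink' m ltac:(lia); lia.
        lia.
      by move/RR => /(_ ltac:(lia)) [].
    case fm: (f m) => //.
    have : U m by rewrite /U fm gm /=; apply/andP; split; lia.
    by move/maxu; lia.
  have rng : forall j, (u.+1 <= j <= k.+1)%N ->
      (hZ f j - hZ f u.+1 = hZ g j - hZ g u.+1)%Z.
    move=> j /andP [a b]; apply: hZ_range => // m hm; apply: agree; lia.
  have hgu : (hZ g i < hZ g u.+1)%Z by apply: mink'; lia.
  exfalso.
  have e1 := rng k.+1 ltac:(lia).
  case: (leqP j0 u) => [j0u|uj0].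
    have := lowu j0 j0u; lia.
  have e2 := rng j0 ltac:(lia).
  have := mink' j0.-1 ltac:(lia); rewrite prednK; last lia.
  lia.
- have nok' : forall k, (i <= k < n)%N -> (hZ g i < hZ g k.+1)%Z.
    move=> k hk; case: (Z.ltb_spec (hZ g i) (hZ g k.+1)) => // H.
    by exfalso; apply: nok; exists k; split.
  have incl := @hZ_incl f g i.+1 n lin.
  have : (hZ f n - hZ f i.+1 <= hZ g n - hZ g i.+1)%Z.
    apply: incl => m hm gm.
    have : RN g m by split => //; exists i; split; [lia| have := nok' m ltac:(lia); lia].
    by move/RR => /(_ ltac:(lia)) [].
  lia.
Qed.

Lemma gk_unique n (Y Y' : {set 'I_n}) : gkR Y = gkR Y' -> #|Y| = #|Y'| -> Y = Y'.
Proof.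
move=> ER EC.
have hn : hZ (inX Y) n = hZ (inX Y') n by rewrite !hZ_card EC.
case: (classic (exists i, (i < n)%N /\ inX Y i != inX Y' i)) => [ex|nex].
  pose P i := (i < n)%N && (inX Y i != inX Y' i).
  have exP : exists i, P i by case: ex => i [a b]; exists i; rewrite /P a b.
  case: (ex_minnP exP) => i /andP [lin ne] mini.
  have pre : forall m, (m < i)%N -> inX Y m = inX Y' m.
    move=> m mi; case: (boolP (inX Y m == inX Y' m)) => [/eqP //|H].
    have : P m by rewrite /P H andbT; lia.
    move/mini; lia.
  exfalso; case fi: (inX Y i) ne; case gi: (inX Y' i) => // _.
    by have := uniq_core ER lin pre fi (negbT gi); lia.
  have := @uniq_core n Y' Y i (esym ER) lin (fun m hm => esym (pre m hm)) gi (negbT fi).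
  lia.
apply/setP => x; rewrite -!inXE.
case: (boolP (inX Y x == inX Y' x)) => [/eqP //|H]; exfalso; apply: nex; exists x; split => //.
Qed.

Lemma iota_split j n : (j <= n)%N -> iota 0 n = iota 0 j ++ iota j (n - j).
Proof. by move=> jn; rewrite -{1}(subnKC jn) iotaD. Qed.

Section Star.
Variables (f : nat -> bool) (n : nat).
Local Notation h := (hZ f).

Definition Ub p := Sr f n p && (h p <? mu f n + h n)%Z.
Definition G m := count Ub (iota 0 m).

Lemma GS m : G m.+1 = (G m + Ub m)%N.
Proof. by rewrite /G -addn1 iotaD count_cat add0n /= addn0. Qed.

Lemma G_mono a b : (a <= b)%N -> (G a <= G b)%N.
Proof.
move=> ab; rewrite /G -(subnKC ab) iotaD count_cat; exact: leq_addr.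
Qed.

Lemma G_const a b : (a <= b)%N -> (forall p, (a <= p < b)%N -> ~~ Ub p) -> G b = G a.
Proof.
elim: b => [|b IH] ab H; first by rewrite leqn0 in ab; rewrite (eqP ab).
case: (ltngtP a b.+1) ab => // [lt|->] _ //.
rewrite GS IH //; last by move=> p hp; apply: H; lia.
by rewrite (negbTE (H b ltac:(lia))) addn0.
Qed.

Lemma Ub_h p m : Ub p -> (p < m <= n)%N -> (h p < h m)%Z.
Proof. by move=> /andP [/SrP [_ H] _]; apply: H. Qed.

Lemma Ub_lt p : Ub p -> (p < n)%N.
Proof. by move=> /andP [/Sr_lt]. Qed.

Lemma Ub_f p : Ub p -> f p = false.
Proof.
move=> U; have := Ub_h U (m := p.+1); rewrite hS.
have := Ub_lt U; case: (f p) => // pn /(_ ltac:(lia)); lia.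
Qed.

Lemma G_le j : (j <= n)%N -> (Z.of_nat (G j) <= h j - mu f n)%Z.
Proof.
move=> jn.
have mj := mu_le (f:=f) jn.
suff : (G j <= T f n (h j))%N.
  by move=> H; have := T_formula f n (h j); lia.
rewrite /G /T (iota_split jn) count_cat.
apply: leq_trans (leq_addr _ _).
have -> : count Ub (iota 0 j) = count (fun p => Ub p && (p < j)%N) (iota 0 j).
  by apply: eq_in_count => p; rewrite mem_iota add0n => /andP [_ ->]; rewrite andbT.
apply: sub_count => p /andP [U pj]; apply/andP; split; first by case/andP: U.
by apply/Z.ltb_spec0; apply: (Ub_h U); lia.
Qed.

Lemma G_eq u : Ub u -> Z.of_nat (G u) = (h u - mu f n)%Z.
Proof.
move=> Uu; have un := Ub_lt Uu.
have mj := mu_le (f:=f) (ltnW un).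
have hun : (h u < h n)%Z by apply: (Ub_h Uu); lia.
have -> : G u = T f n (h u).
  rewrite /G /T (iota_split (ltnW un)) count_cat.
  have -> : count (fun p => Sr f n p && (h p <? h u)%Z) (iota u (n - u)) = 0%N.
    apply/eqP; rewrite -leqn0 leqNgt -has_count; apply/negP => /hasP [p].
    rewrite mem_iota => /andP [up _] /andP [S /Z.ltb_spec0 hp].
    case: (ltngtP u p) up => // [lt|E] _.
      have := proj2 (proj1 (SrP _ _ _) S) n ltac:(have := Sr_lt S; lia).
      have := Ub_h Uu (m := p) ltac:(have := Sr_lt S; lia); lia.
    by move: hp; rewrite E; lia.
  rewrite addn0; apply: eq_in_count => p; rewrite mem_iota add0n => /andP [_ pu].
  rewrite /Ub; case S: (Sr f n p) => //=.
  have := Ub_h Uu (m := n) ltac:(lia).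
  have := proj2 (proj1 (SrP _ _ _) S) u ltac:(lia).
  move: Uu => /andP [_ /Z.ltb_spec0 Uu].
  case: (Z.ltb_spec (h p) (h u)); case: (Z.ltb_spec (h p) (mu f n + h n)) => //; lia.
have := T_formula f n (h u); lia.
Qed.

Lemma G_n : (0 <= h n)%Z -> Z.of_nat (G n) = h n.
Proof.
move=> D; have := T_formula f n (mu f n + h n).
have := mu_le0 (f:=f) (b:=n).
have -> : G n = T f n (mu f n + h n) by [].
lia.
Qed.

Lemma hg_eq (g : nat -> bool) : (forall m, g m = f m || Ub m) ->
  forall m, hZ g m = (h m - 2 * Z.of_nat (G m))%Z.
Proof.
move=> E; elim => [|m IH]; first by [].
rewrite !hS IH E GS.
case U: (Ub m); first by rewrite (Ub_f U) orbT addn1; cbv iota beta; lia.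
by rewrite orbF addn0; case: (f m); cbv iota beta; lia.
Qed.

Lemma E1gen (g : nat -> bool) : (forall m, g m = f m || Ub m) ->
  forall k, (k < n)%N -> (RN g k <-> RN f k).
Proof.
move=> E k kn; have hg := hg_eq E.
case Uk: (Ub k).
  have fk := Ub_f Uk; split => [[_ [j [jk hj]]]|[]]; last by rewrite fk.
  exfalso; move: hj; rewrite !hg.
  have G1 := G_eq Uk; have G2 := G_le (j := j) ltac:(lia).
  have G3 := G_mono jk; rewrite GS Uk hS fk.
  have : (mu f n <= h j)%Z by apply: mu_le; lia.
  lia.
have gk : g k = f k by rewrite E Uk orbF.
split => [[gk' [j [jk hj]]]|[fk [j [jk hj]]]].
  split; first by rewrite -gk.
  exists j; split => //; move: hj; rewrite !hg.
  have := G_mono (ltnW (leq_ltn_trans jk (ltnSn k))); lia.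
split; first by rewrite gk.
pose P q := (q <= k)%N && (h q <=? h k.+1)%Z.
have exP : exists q, P q by exists j; rewrite /P jk; apply/Z.leb_spec0.
have ubP : forall q, P q -> (q <= k)%N by move=> q /andP [].
case: (ex_maxnP exP ubP) => jm /andP [jmk /Z.leb_spec0 hjm] maxj.
have above : forall m, (jm < m <= k)%N -> (h k.+1 < h m)%Z.
  move=> m hm; case: (Z.ltb_spec (h k.+1) (h m)) => // H.
  have : P m by rewrite /P; apply/andP; split; [lia|apply/Z.leb_spec0].
  move/maxj; lia.
have noU : forall p, (jm.+1 <= p < k.+1)%N -> ~~ Ub p.
  move=> p hp; apply/negP => Up.
  case: (ltngtP p k) => [pk|pk|E']; last by rewrite E' Uk in Up.
    have := Ub_h Up (m := k.+1) ltac:(lia); have := above p ltac:(lia); lia.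
  lia.
have Gc := @G_const jm.+1 k.+1 ltac:(lia) noU.
have G1 := GS jm.
case Ujm: (Ub jm).
  have jmlt : (jm < k)%N by case: (ltngtP jm k) jmk => // E' _; rewrite E' Uk in Ujm.
  have hjl := Ub_h Ujm (m := k.+1) ltac:(lia).
  have hjs : h jm.+1 = (h jm + 1)%Z by rewrite hS (Ub_f Ujm).
  exists jm.+1; split => //; rewrite !hg Gc G1 Ujm; lia.
exists jm; split => //; rewrite !hg Gc G1 Ujm addn0; lia.
Qed.

Lemma Ub_cyc p : (0 <= h n)%Z -> (Ub p <-> [/\ (p < n)%N,
   (forall m, (p < m <= n)%N -> (h p < h m)%Z) &
   (forall m, (0 < m <= p)%N -> (h p < h m + h n)%Z)]).
Proof.
move=> D; rewrite /Ub; split.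
  move=> /andP [/SrP [pn H] /Z.ltb_spec0 hp]; split => // m hm.
  have := mu_le (f:=f) (b:=n) (m:=m) ltac:(lia); lia.
move=> [pn H1 H2]; apply/andP; split; first by apply/SrP.
apply/Z.ltb_spec0.
have [m0 [m0n E0]] := mu_ex f n.
rewrite E0.
case: (ltngtP m0 p) => [lt|gt|eq].
  case: m0 lt E0 m0n => [|m0] lt E0 m0n.
    by have := H1 n ltac:(lia); simpl; lia.
  by apply: H2; lia.
  have := H1 m0 ltac:(lia); lia.
rewrite eq; case: p eq H1 H2 pn => [|p] eq H1 H2 pn.
  by have := H1 n ltac:(lia); simpl; lia.
by have := H2 p.+1 ltac:(lia); lia.
Qed.

End Star.

Definition Uset n (X : {set 'I_n}) : {set 'I_n} := [set x : 'I_n | Ub (inX X) n x].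

Lemma inX_U n (X : {set 'I_n}) m : inX (Uset X) m = Ub (inX X) n m.
Proof.
case U: (Ub (inX X) n m).
  have mn := Ub_lt U.
  by rewrite -[m]/(nat_of_ord (Ordinal mn)) inXE inE.
apply/negbTE/negP; rewrite /inX => /existsP [y /andP [Uy /eqP E]].
by move: Uy; rewrite inE E U.
Qed.

Lemma inX_setU n (A B : {set 'I_n}) m : inX (A :|: B) m = inX A m || inX B m.
Proof.
apply/idP/idP.
  rewrite /inX => /existsP [y /andP [yAB E]]; move: yAB; rewrite inE => /orP [yA|yB];
    apply/orP; [left|right]; apply/existsP; exists y; by rewrite ?yA ?yB.
by case/orP; rewrite /inX => /existsP [y /andP [yA E]]; apply/existsP; exists y;
   rewrite inE ?yA ?orbT.
Qed.

Lemma gkR_RN n (A : {set 'I_n}) (k : 'I_n) : k \in gkR A <-> RN (inX A) k.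
Proof. by rewrite gkR_char /RN inXE. Qed.

Lemma star_char n (X : {set 'I_n}) : (#|X| <= n./2)%N -> gk_star X = X :|: Uset X.
Proof.
move=> hX.
set f := inX X.
have D : (0 <= hZ f n)%Z by rewrite /f hZ_card; lia.
set Y0 := X :|: Uset X.
have gY : forall m, inX Y0 m = f m || Ub f n m by move=> m; rewrite inX_setU inX_U.
have RY : gkR Y0 = gkR X.
  apply/setP => k; apply/idP/idP => /gkR_RN H; apply/gkR_RN;
    by apply/(E1gen gY (ltn_ord k)).
have CY : #|Y0| = (n - #|X|)%N.
  have := hZ_card Y0; have := hZ_card X; rewrite (hg_eq gY) -/f.
  have := G_n D; lia.
rewrite /gk_star; case: pickP => [Y /andP [YC /eqP YS]|none] /=.
  apply: gk_unique; last by rewrite YS CY.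
  by move: YC; rewrite inE => /eqP ->.
by have := none Y0; rewrite /gk_chain inE RY eqxx CY eqxx.
Qed.

Lemma sig_val n (x : 'I_n) : nat_of_ord (sigma n x) = if nat_of_ord x == n.-1 then 0%N else (nat_of_ord x).+1.
Proof.
rewrite /sigma permE /=; case: n x => [|n] [x xn] //=.
case: eqP => [->|ne]; first by rewrite modnn.
by rewrite modn_small //; lia.
Qed.

Lemma inX_img n (X : {set 'I_n}) (y : 'I_n) : inX (sigma n @: X) (sigma n y) = inX X y.
Proof. by rewrite !inXE mem_imset //; exact: perm_inj. Qed.

Lemma h_sig N (X : {set 'I_N.+1}) m : (m <= N)%N ->
  hZ (inX (sigma _ @: X)) m.+1 = ((if inX X N then -1 else 1) + hZ (inX X) m)%Z.
Proof.
elim: m => [|m IH] mN.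
  have E : nat_of_ord (sigma _ (@ord_max N)) = 0%N by rewrite sig_val /= eqxx.
  rewrite hS.
  have -> : inX (sigma N.+1 @: X) 0 = inX X N by rewrite -E inX_img.
  change (hZ (inX (sigma N.+1 @: X)) 0) with 0%Z;
  change (hZ (inX X) 0) with 0%Z; lia.
rewrite hS IH; last lia.
have mN' : (m < N.+1)%N by lia.
have E : nat_of_ord (sigma _ (Ordinal mN')) = m.+1.
  by rewrite sig_val /=; case: eqP => //; lia.
have -> : inX (sigma N.+1 @: X) m.+1 = inX X m by rewrite -E inX_img.
rewrite [hZ (inX X) m.+1]hS; lia.
Qed.

Lemma Ub_sig N (X : {set 'I_N.+1}) (x : 'I_N.+1) :
  (0 <= hZ (inX X) N.+1)%Z ->
  Ub (inX (sigma _ @: X)) N.+1 (sigma _ x) = Ub (inX X) N.+1 x.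
Proof.
move=> D.
set f := inX X; set g := inX (sigma _ @: X).
set e := (if f N then -1 else 1)%Z.
have ee : e = 1%Z \/ e = (-1)%Z by rewrite /e; case: (f N); [right|left].
have hg : forall m, (m <= N)%N -> hZ g m.+1 = (e + hZ f m)%Z by move=> m; exact: h_sig.
have hN : hZ f N.+1 = (hZ f N + e)%Z by rewrite hS.
have hgN : hZ g N.+1 = hZ f N.+1 by rewrite hg // hN; lia.
have h0 : forall F, hZ F 0 = 0%Z by [].
have D' : (0 <= hZ g N.+1)%Z by rewrite hgN.
apply/idP/idP.
  move/(Ub_cyc _ D') => [a A1 A2]; apply/(Ub_cyc _ D); rewrite -/f.
  move: a A1 A2; rewrite sig_val; case: eqP => [xN|xN] a A1 A2; move: xN => /= xN.
  - rewrite xN; split => // m hm.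
    + have := A1 1%N ltac:(lia); rewrite hg // !h0.
      have -> : m = N.+1 by lia.
      rewrite hN; lia.
    + have := A1 m.+1 ltac:(lia); rewrite hg; last lia.
      rewrite hN !h0; lia.
  - have xlt : (x < N)%N by move: (ltn_ord x) xN; rewrite /=; lia.
    split => // m hm.
    + case: (ltngtP m N.+1) => [mlt|mgt|mE]; [|lia|].
        have := A1 m.+1 ltac:(lia); rewrite !hg; lia.
      have := A2 1%N ltac:(lia); rewrite !hg //; last lia; rewrite [hZ f 0](h0 f) mE hN; lia.
    + have := A2 m.+1 ltac:(lia); rewrite !hg; lia.
move/(Ub_cyc _ D) => [a A1 A2]; apply/(Ub_cyc _ D'); rewrite -/g; rewrite -/f in a A1 A2.
rewrite sig_val; case: eqP => [xN|xN]; move: xN => /= xN.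
- rewrite xN in a A1 A2; split => //.
  + move=> m hm; case: m hm => [|m] hm; first lia.
    rewrite hg; last lia; rewrite [hZ g 0](h0 g).
    case: m hm => [|m] hm.
      by have := A1 N.+1 ltac:(lia); rewrite [hZ f 0](h0 f) hN; lia.
    have := A2 m.+1 ltac:(lia); rewrite hN; lia.
  + move=> m hm; lia.
- have xlt : (x < N)%N by move: (ltn_ord x) xN; rewrite /=; lia.
  split; first lia.
  + move=> m hm; case: m hm => [|m] hm; first lia.
    have := A1 m ltac:(lia); rewrite !hg; lia.
  + move=> m hm; case: m hm => [|m] hm; first lia.
    rewrite hgN !hg; try lia.
    case: m hm => [|m] hm.
      by have := A1 N.+1 ltac:(lia); rewrite [hZ f 0](h0 f); lia.
    by have := A2 m.+1 ltac:(lia); lia.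
Qed.

Lemma U_sig n (X : {set 'I_n}) : (#|X| <= n./2)%N ->
  Uset (sigma n @: X) = sigma n @: Uset X.
Proof.
case: n X => [|N] X hX; first by apply/setP => -[].
have D : (0 <= hZ (inX X) N.+1)%Z by rewrite hZ_card; lia.
apply/setP => z; rewrite -(permKV (sigma N.+1) z) mem_imset; last exact: perm_inj.
by rewrite !inE Ub_sig.
Qed.

Lemma main1 n (X : {set 'I_n}) : (#|X| <= n./2)%N ->
  gk_star (sigma n @: X) = sigma n @: gk_star X.
Proof.
move=> hX.
have hX' : (#|sigma n @: X| <= n./2)%N by rewrite card_imset //; exact: perm_inj.
by rewrite !star_char // imsetU U_sig.
Qed.

Lemma imset_perm_mul (T : finType) (s t : {perm T}) (A : {set T}) :
  (s * t)%g @: A = t @: (s @: A).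
Proof. by rewrite -imset_comp; apply: eq_imset => x; rewrite permM. Qed.

Lemma main_pow n (X : {set 'I_n}) j : (#|X| <= n./2)%N ->
  gk_star ((sigma n ^+ j)%g @: X) = (sigma n ^+ j)%g @: gk_star X.
Proof.
move=> hX; elim: j => [|j IH].
  have E : forall A : {set 'I_n}, (sigma n ^+ 0)%g @: A = A.
    by move=> A; rewrite expg0 -[RHS]imset_id; apply: eq_imset => x; rewrite perm1.
  by rewrite !E.
rewrite expgSr !imset_perm_mul main1 ?IH //.
by rewrite card_imset //; exact: perm_inj.
Qed.

Theorem lemma3p1 (n : nat) (X : {set 'I_n}) :
  #|X| <= n./2 ->
  [/\ gk_star (sigma n @: X) = sigma n @: gk_star X,
      (forall j : nat, gk_star ((sigma n ^+ j)%g @: X) = (sigma n ^+ j)%g @: gk_star X),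
      (forall j : nat, gk_star ((sigma n ^- j)%g @: X) = (sigma n ^- j)%g @: gk_star X)
    & (forall rho : {perm 'I_n}, rho \in <[sigma n]>%g ->
         gk_star (rho @: X) = rho @: gk_star X)].
Proof.
move=> hX.
have H4 : forall rho : {perm 'I_n}, rho \in <[sigma n]>%g ->
    gk_star (rho @: X) = rho @: gk_star X.
  by move=> rho /cycleP [i ->]; apply: main_pow.
split => //; first exact: main1.
  by move=> j; apply: main_pow.
by move=> j; apply: H4; rewrite groupV mem_cycle.
Qed.
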